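(* Let $P\in N_1$ be a sum of $8$ monomials, not necessarily distinct (i.e. $P(1)=8$). Then $P$ has unique factorisation inside $N_1$: any two factorisations of $P$ into irreducible elements of $N_1$ coincide up to the order of the factors.
   Context: $N_1=\mathbb{Z}_{\ge0}[X]$ is the semiring of univariate polynomials with nonnegative integer coefficients. An element $Q\neq0,1$ of $N_1$ is irreducible if in every factorisation $Q=ST$ with $S,T\in N_1$ one of $S,T$ is $1$. *)

(* Defs.v *)
From HB Require Import structures.
From mathcomp Require Import all_boot all_algebra.
Set Implicit Arguments. Unset Strict Implicit. Unset Printing Implicit Defensive.
Import GRing.Theory.
Local Open Scope ring_scope.

(* N_1 = Z_{>=0}[X] is represented by {poly nat}. *)
Definition N1 := {poly nat}.

Definition irreducibleN1 (Q : {poly nat}) : Prop :=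
  Q <> 0 /\ Q <> 1 /\
  forall S T : {poly nat}, Q = S * T -> S = 1 \/ T = 1.

Definition irr_factorisation (P : {poly nat}) (fs : seq {poly nat}) : Prop :=
  (forall f, f \in fs -> irreducibleN1 f) /\ \prod_(f <- fs) f = P.

(* Main.v *)
Require Import Defs.
From mathcomp Require Import all_boot all_algebra.
From mathcomp Require Import zify.
Set Implicit Arguments. Unset Strict Implicit.

Lemma perm_pick (h : nat) L R1 r R2 : h = r ->
  perm_eq (h :: L) (R1 ++ r :: R2) -> perm_eq L (R1 ++ R2).
Proof.
move=> -> H; rewrite -(perm_cons r); apply: (perm_trans H).
by rewrite -cat1s perm_catCA.
Qed.

Lemma perm_pick2 (L1 L2 R1 R2 : seq nat) h r : h = r ->
  perm_eq (L1 ++ h :: L2) (R1 ++ r :: R2) -> perm_eq (L1 ++ L2) (R1 ++ R2).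
Proof.
move=> E H; apply: (@perm_pick h (L1 ++ L2) R1 r R2 E).
apply: perm_trans H; by rewrite -cat1s perm_catCA.
Qed.

Ltac clearNE := repeat match goal with NE : is_true (_ != _) |- _ => clear NE end.
Ltac solve_dis := match goal with
 | |- _ \/ _ => first [left; solve_dis | right; solve_dis]
 | |- _ /\ _ => split; solve_dis
 | |- _ => lia
end.
Ltac msearch :=
  match goal with
  | H : is_true (perm_eq [::] _) |- _ => clear H; solve_dis
  | H : is_true (perm_eq (?h :: ?L) ?R) |- _ =>
      let Hin := fresh "Hin" in
      assert (Hin : h \in R) by (rewrite -(perm_mem H) mem_head; done);
      msplit H h L (@nil nat) R Hin
  end
with msplit H h L pre R Hin :=
  lazymatch R with
  | ?r :: ?R' =>
     let E := fresh "E" in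
     destruct (eqVneq h r) as [E|E];
     [ clearNE;
       let H2 := fresh "H" in
       pose proof (@perm_pick h L pre r R' E H) as H2; cbn [cat] in H2; clear H Hin;
       try subst; (try (exfalso; lia)); msearch
     | let pre' := eval cbn [cat] in (pre ++ [:: r]) in msplit H h L pre' R' Hin ]
  | [::] =>
     move: Hin; rewrite !inE;
     repeat match goal with NE : is_true (?a != ?b) |- _ => try rewrite (negbTE NE); clear NE end;
     done
  end.

Ltac cc_R H L1 h L2 R1 R :=
  lazymatch R with
  | ?r :: ?R2 =>
      first [ let E := fresh "E" in
              assert (E : h = r) by (reflexivity || apply: addnC);
              let H' := fresh "H" in
              pose proof (@perm_pick2 L1 L2 R1 R2 h r E H) as H';
              cbn [cat] in H'; clear H E
            | let R1' := eval cbn [cat] in (R1 ++ [:: r]) in cc_R H L1 h L2 R1' R2 ]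
  end.
Ltac cc_L H L1 L R :=
  lazymatch L with
  | ?h :: ?L2 => first [ cc_R H L1 h L2 (@nil nat) R
                      | let L1' := eval cbn [cat] in (L1 ++ [:: h]) in cc_L H L1' L2 R ]
  end.
Ltac cc1 :=
  match goal with H : is_true (perm_eq ?L ?R) |- _ => cc_L H (@nil nat) L R end.

Ltac split_or :=
  repeat match goal with
  | |- is_true (_ || _) -> _ => case/orP
  | |- is_true (_ == _) -> _ => let E := fresh "E" in move/eqP=> E
  end.


Ltac perm_lia := apply/permP => P /=; lia.
Lemma perm_via (L L' R R' : seq nat) : perm_eq L' R' -> perm_eq L L' -> perm_eq R' R -> perm_eq L R.
Proof. move=> H1 H2 H3; apply: perm_trans H2 _; exact: perm_trans H1 H3. Qed.
Ltac pvia H := apply: (perm_via H); perm_lia.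
Lemma caseA (a d y z q r : nat) : a < d ->
  perm_eq [:: y; z; a+y; a+z] [:: q; r; d+q; d+r] -> z = y + d \/ y = z + d.
Proof. move=> ad H. msearch. Qed.
Lemma caseB (a m y z q r : nat) : 0 < m -> 0 < a ->
  perm_eq [:: m; y; z; a+y; a+z] [:: q; r; a+m+a; a+m+q; a+m+r] -> y = a + m \/ z = a + m.
Proof. move=> m0 a0 H. msearch. Qed.

Lemma c4A a d y z q r : a < d ->
  perm_eq [:: 0; d; y; z; a; a+d; a+y; a+z] [:: 0; a; q; r; d; d+a; d+q; d+r] ->
  z = y + d \/ y = z + d.
Proof.
move=> ad H; rewrite (addnC d a) in H; apply: (caseA ad) (_ : perm_eq _ [:: q; r; d+q; d+r]).
rewrite -(perm_cat2l [:: 0; d; a; a+d]); pvia H.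
Qed.

Lemma c4B a m y z q r : 0 < m -> 0 < a ->
  perm_eq [:: 0; m; y; z; a; a+m; a+y; a+z] [:: 0; a; q; r; a+m; a+m+a; a+m+q; a+m+r] ->
  y = a + m \/ z = a + m.
Proof.
move=> m0 a0 H; apply: (caseB m0 a0) (_ : perm_eq _ [:: q; r; a+m+a; a+m+q; a+m+r]).
rewrite -(perm_cat2l [:: 0; a; a+m]); pvia H.
Qed.

Definition Dis (d x y z : nat) :=
  (x = d /\ (z = y + d \/ y = z + d)) \/ (y = d /\ (z = x + d \/ x = z + d))
  \/ (z = d /\ (x = y + d \/ y = x + d)).

Lemma core4in a d x y z q r : a < d -> d \in [:: x; y; z] ->
  perm_eq [:: 0; x; y; z; a; a+x; a+y; a+z] [:: 0; a; q; r; d; d+a; d+q; d+r] ->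
  Dis d x y z.
Proof.
move=> ad; rewrite !inE => /or3P[] /eqP E H; [subst x|subst y|subst z]; rewrite /Dis.
- by left; split=> //; exact: (c4A ad H).
- have H' : perm_eq [:: 0; d; x; z; a; a+d; a+x; a+z] [:: 0; a; q; r; d; d+a; d+q; d+r].
    by pvia H.
  by right; left; split=> //; exact: (c4A ad H').
- have H' : perm_eq [:: 0; d; y; x; a; a+d; a+y; a+x] [:: 0; a; q; r; d; d+a; d+q; d+r].
    by pvia H.
  by right; right; split=> //; exact: (c4A ad H').
Qed.

Lemma core4V a d x y z q r : a < d ->
  perm_eq [:: 0; x; y; z; a; a+x; a+y; a+z] [:: 0; a; q; r; d; d+a; d+q; d+r] ->
  Dis d x y z.
Proof.
move=> ad H.
have : d \in [:: 0; x; y; z; a; a+x; a+y; a+z] by rewrite (perm_mem H) !inE eqxx !orbT.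
rewrite !inE => /orP[/eqP E|]; first lia.
case/orP=> [E|]; first by apply: core4in ad _ H; rewrite !inE E.
case/orP=> [E|]; first by apply: core4in ad _ H; rewrite !inE E !orbT.
case/orP=> [E|]; first by apply: core4in ad _ H; rewrite !inE E !orbT.
case/orP=> [/eqP E|]; first lia.
have [a0|a0] := posnP a.
  subst a; rewrite !add0n => /or3P[] E; apply: core4in ad _ H; by rewrite !inE E ?orbT.
case/or3P => /eqP E.
- have x0 : 0 < x by lia.
  have H' : perm_eq [:: 0; x; y; z; a; a+x; a+y; a+z] [:: 0; a; q; r; a+x; a+x+a; a+x+q; a+x+r].
    by move: H; rewrite E.
  have := c4B x0 a0 H'; rewrite -E => Ed.
  by apply: core4in ad _ H; case: Ed => ->; rewrite !inE eqxx ?orbT.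
- have y0 : 0 < y by lia.
  have H' : perm_eq [:: 0; y; x; z; a; a+y; a+x; a+z] [:: 0; a; q; r; a+y; a+y+a; a+y+q; a+y+r].
    by rewrite E in H; pvia H.
  have := c4B y0 a0 H'; rewrite -E => Ed.
  by apply: core4in ad _ H; case: Ed => ->; rewrite !inE eqxx ?orbT.
- have z0 : 0 < z by lia.
  have H' : perm_eq [:: 0; z; x; y; a; a+z; a+x; a+y] [:: 0; a; q; r; a+z; a+z+a; a+z+q; a+z+r].
    by rewrite E in H; pvia H.
  have := c4B z0 a0 H'; rewrite -E => Ed.
  by apply: core4in ad _ H; case: Ed => ->; rewrite !inE eqxx ?orbT.
Qed.

Lemma core4 (a d x y z p q r : nat) : a < d ->
  perm_eq [:: 0; x; y; z; a; a+x; a+y; a+z] [:: 0; p; q; r; d; d+p; d+q; d+r] ->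
  Dis d x y z.
Proof.
move=> ad H.
have H1 : perm_eq [:: x; y; z; a; a+x; a+y; a+z] [:: p; q; r; d; d+p; d+q; d+r].
  by move: H; rewrite perm_cons.
have : a \in [:: p; q; r; d; d+p; d+q; d+r] by rewrite -(perm_mem H1) !inE eqxx !orbT.
rewrite !inE => /orP[/eqP E|].
  by rewrite -E in H; apply: core4V ad H.
case/orP=> [/eqP E|].
  rewrite -E in H; apply: (core4V (q := p) (r := r) ad); by pvia H.
case/orP=> [/eqP E|].
  rewrite -E in H; apply: (core4V (q := p) (r := q) ad); by pvia H.
move=> /or4P[] /eqP E; lia.
Qed.

Lemma core2 (a b c d : nat) : perm_eq [:: 0; b; a; a+b] [:: 0; d; c; c+d] -> a = c \/ a = d.
Proof. move=> H; msearch. Qed.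


Import GRing.Theory.
Local Open Scope ring_scope.

Definition M (s : seq nat) : {poly nat} := \sum_(i <- s) 'X^i.

Lemma M_nil : M [::] = 0. Proof. by rewrite /M big_nil. Qed.
Lemma M_cons i s : M (i :: s) = 'X^i + M s. Proof. by rewrite /M big_cons. Qed.

Lemma coef_M s k : (M s)`_k = count_mem k s.
Proof.
elim: s => [|i s IH]; first by rewrite M_nil coef0.
rewrite M_cons coefD coefXn IH /= eq_sym.
by case: (i == k).
Qed.

Lemma M_perm s t : perm_eq s t -> M s = M t.
Proof. exact: perm_big. Qed.

Lemma M_eq s t : M s = M t -> perm_eq s t.
Proof.
move=> E; apply/allP => k _ /=; by rewrite -!coef_M E.
Qed.

Lemma M_cat s t : M (s ++ t) = M s + M t.
Proof. by rewrite /M big_cat. Qed.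

Lemma M_mul s t : M s * M t = M [seq (i + j)%N | i <- s, j <- t].
Proof.
elim: s => [|i s IH]; first by rewrite M_nil mul0r -M_nil.
rewrite M_cons mulrDl IH /= M_cat; congr (_ + _).
rewrite /M big_map mulr_sumr; apply: eq_bigr => j _.
by rewrite exprD.
Qed.

Lemma M1 s : (M s).[1] = size s.
Proof.
elim: s => [|i s IH]; first by rewrite M_nil horner0.
by rewrite M_cons hornerD hornerXn expr1n IH.
Qed.

Lemma MX : M [:: 1%N] = 'X.
Proof. by rewrite M_cons M_nil addr0 expr1. Qed.

Lemma MC (c : nat) : c%:P = M (nseq c 0%N).
Proof.
elim: c => [|c IH]; first by rewrite polyC0 M_nil.
rewrite /= M_cons -IH expr0.
have -> : c.+1 = (1 + c)%R by [].
by rewrite polyCD polyC1.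
Qed.

Lemma exM (p : {poly nat}) : exists s, p = M s.
Proof.
elim/poly_ind: p => [|p c [s ->]]; first by exists [::]; rewrite M_nil.
exists ([seq (i + j)%N | i <- s, j <- [:: 1%N]] ++ nseq c 0%N).
by rewrite M_cat -M_mul MX MC.
Qed.

Lemma M_neq0 s : s != [::] -> M s != 0.
Proof.
move=> ns; apply/eqP => E.
have := congr1 (fun p => p.[1]) E; rewrite M1 horner0.
by case: s ns {E}.
Qed.

Lemma mulI (f g h : {poly nat}) : f != 0 -> f * g = f * h -> g = h.
Proof.
move=> nf E.
have inj : injective (Posz) by move=> ?? [].
apply: (map_inj_poly (f := Posz)) => //.
apply: (mulfI (x := map_poly Posz f)); last by rewrite -!rmorphM E.
by rewrite -size_poly_eq0 size_map_inj_poly // size_poly_eq0.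
Qed.

Notation irr := irreducibleN1.

Lemma X_neq1 : ('X : {poly nat}) != 1.
Proof. apply/eqP => /(congr1 (fun p : {poly nat} => p`_0)); by rewrite coefX coefC. Qed.

Lemma neq1_val (p : {poly nat}) : p.[1] != 1%N -> p != 1.
Proof. by apply: contra => /eqP ->; rewrite hornerC. Qed.

Lemma irr_neq0 f : irr f -> f != 0.
Proof. by case=> /eqP. Qed.

Lemma irr_X f : irr f -> f`_0 = 0%N -> f = 'X.
Proof.
move=> If; have [s Es] := exM f; rewrite Es coef_M => c0.
have n0 : 0%N \notin s by rewrite -has_pred1 has_count c0.
have Es' : s = [seq (i + j)%N | i <- [:: 1%N], j <- map predn s].
  rewrite /= cats0 -map_comp -{1}(map_id s); apply/eq_in_map => i /=.
  by case: i => // Hi; rewrite Hi in n0.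
have Ef : f = 'X * M (map predn s) by rewrite -MX M_mul -Es' -Es.
case: If => _ [_ /(_ _ _ Ef)] [X1|M1]; first by move/eqP: X1; rewrite (negbTE X_neq1).
by rewrite -Es Ef M1 mulr1.
Qed.

Lemma irr_shape f n : irr f -> f`_0 != 0%N -> f.[1] = n.+1 ->
  exists t, size t = n /\ f = M (0%N :: t).
Proof.
move=> If; have [s Es] := exM f; rewrite Es coef_M M1 => c0 sz.
have s0 : 0%N \in s by rewrite -has_pred1 has_count lt0n.
exists (rem 0%N s); split; first by rewrite size_rem // sz.
exact: M_perm (perm_to_rem s0).
Qed.

Lemma irr_ge2 f : irr f -> f`_0 != 0%N -> (2 <= f.[1])%N.
Proof.
move=> If c0; have [s Es] := exM f.
move: (If) => [nf0 [nf1 _]].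
case E: (f.[1]) => [|[|n]] //.
  by move: E; rewrite Es M1; case: s Es => // Es _; exfalso; apply: nf0; rewrite Es M_nil.
have [t [st Ef]] := irr_shape If c0 E.
case: t st Ef => // _ Ef; exfalso; apply: nf1; by rewrite Ef M_cons M_nil addr0 expr0.
Qed.

Definition B (b : nat) := M [:: 0%N; b].

Lemma BB a b : B a * B b = M [:: 0%N; b; a; (a + b)%N].
Proof. by rewrite /B M_mul /= !add0n !addn0. Qed.

Lemma BM a x y z : B a * M [:: 0%N; x; y; z] =
  M [:: 0%N; x; y; z; a; (a + x)%N; (a + y)%N; (a + z)%N].
Proof. by rewrite /B M_mul /= !add0n !addn0. Qed.

Lemma valB b : (B b).[1] = 2%N. Proof. by rewrite M1. Qed.
Lemma B_neq1 b : B b != 1. Proof. by apply: neq1_val; rewrite valB. Qed.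
Lemma B_neq0 b : B b != 0. Proof. exact: M_neq0. Qed.

Lemma K2 a b c d : B a * B b = B c * B d -> a = c \/ a = d.
Proof. rewrite !BB => /M_eq; exact: core2. Qed.

Lemma K4lt a d x y z p q r : (a < d)%N ->
  B a * M [:: 0%N; x; y; z] = B d * M [:: 0%N; p; q; r] ->
  exists w, M [:: 0%N; x; y; z] = B w * B d.
Proof.
move=> ad; rewrite !BM => /M_eq /(core4 ad).
case=> [[-> [->|->]]|[[-> [->|->]]|[-> [->|->]]]].
- by exists y; rewrite BB.
- by exists z; rewrite BB; apply: M_perm; apply/permP => P /=; lia.
- by exists x; rewrite BB; apply: M_perm; apply/permP => P /=; lia.
- by exists z; rewrite BB; apply: M_perm; apply/permP => P /=; lia.
- by exists y; rewrite BB; apply: M_perm; apply/permP => P /=; lia.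
- by exists x; rewrite BB; apply: M_perm; apply/permP => P /=; lia.
Qed.

Lemma K4 a d x y z p q r : a != d ->
  B a * M [:: 0%N; x; y; z] = B d * M [:: 0%N; p; q; r] ->
  exists w, M [:: 0%N; x; y; z] = B w * B d.
Proof.
case: (ltngtP a d) => // ad _ E; first exact: K4lt ad E.
have [w Ew] := K4lt ad (esym E).
exists w; apply: (mulI (B_neq0 a)).
by rewrite E Ew mulrA mulrC [B d * B w]mulrC.
Qed.

Lemma hM1 (p q : {poly nat}) : (p * q).[1] = (p.[1] * q.[1])%N.
Proof. exact: hornerM. Qed.

Lemma prod2 (f g : {poly nat}) : \prod_(h <- [:: f; g]) h = f * g.
Proof. by rewrite !big_cons big_nil mulr1. Qed.
Lemma prod3 (f g h : {poly nat}) : \prod_(k <- [:: f; g; h]) k = f * (g * h).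
Proof. by rewrite !big_cons big_nil mulr1. Qed.

Lemma perm2 (T : eqType) (x y : T) : perm_eq [:: x; y] [:: y; x].
Proof. apply/permP => P /=; lia. Qed.

Lemma irr_BB F a b : irr F -> F = B a * B b -> False.
Proof.
case=> _ [_ H] E; case: (H _ _ E) => /eqP; by rewrite (negbTE (B_neq1 _)).
Qed.

Lemma val2 f : irr f -> f`_0 != 0%N -> f.[1] = 2%N -> exists a, f = B a.
Proof. move=> If c0 v; have [t [st ->]] := irr_shape If c0 v; case: t st => [|a [|]] //= _; by exists a. Qed.

Lemma val4 f : irr f -> f`_0 != 0%N -> f.[1] = 4%N ->
  exists x y z, f = M [:: 0%N; x; y; z].
Proof.
move=> If c0 v; have [t [st ->]] := irr_shape If c0 v.
case: t st => [|x [|y [|z [|]]]] //= _; by exists x, y, z.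
Qed.

Lemma c0_prod (fs : seq {poly nat}) :
  ((\prod_(f <- fs) f)`_0 == 0%N) = has (fun f : {poly nat} => f`_0 == 0%N) fs.
Proof.
elim: fs => [|f fs IH]; first by rewrite big_nil coefC.
by rewrite big_cons coef0M /= -IH -muln_eq0.
Qed.

Definition good (f : {poly nat}) := irr f /\ f`_0 != 0%N.

Lemma val_pos fs : (forall f, f \in fs -> good f) -> (0 < (\prod_(f <- fs) f).[1])%N.
Proof.
elim: fs => [|f fs IH] Hg; first by rewrite big_nil hornerC.
rewrite big_cons hM1 muln_gt0 IH; last by move=> g gi; apply: Hg; rewrite inE gi orbT.
have [If c0] := Hg f (mem_head _ _).
by have := irr_ge2 If c0; case: (f.[1]).
Qed.

Lemma ar2 u w : (2 <= u)%N -> (2 <= w)%N -> (u * w %| 8)%N ->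
  (u = 2 /\ (w = 2 \/ w = 4) \/ w = 2 /\ u = 4)%N.
Proof.
move=> u2 w2 d; have le := dvdn_leq (isT : (0 < 8)%N) d.
have u4 : (u <= 4)%N by nia.
have w4 : (w <= 4)%N by nia.
move: u2 w2 u4 w4 d le.
case: u => [|[|[|[|[|u]]]]] //; case: w => [|[|[|[|[|w]]]]] //; lia.
Qed.

Lemma ar3 u v w : (2 <= u)%N -> (2 <= v)%N -> (2 <= w)%N -> (u * (v * w) %| 8)%N ->
  (u = 2 /\ v = 2 /\ w = 2)%N.
Proof.
move=> u2 v2 w2 d; have le := dvdn_leq (isT : (0 < 8)%N) d.
nia.
Qed.

Lemma ar4 u v w t s : (2 <= u)%N -> (2 <= v)%N -> (2 <= w)%N -> (2 <= t)%N ->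
  (0 < s)%N -> (u * (v * (w * (t * s))) %| 8)%N -> False.
Proof.
move=> u2 v2 w2 t2 s0 d; have le := dvdn_leq (isT : (0 < 8)%N) d.
nia.
Qed.

Lemma shapes fs : (forall f, f \in fs -> good f) -> ((\prod_(f <- fs) f).[1] %| 8)%N ->
  fs = [::] \/ (exists f, fs = [:: f]) \/
  (exists a F, perm_eq fs [:: B a; F] /\ good F /\ (F.[1] = 2 \/ F.[1] = 4)%N) \/
  (exists a b c, perm_eq fs [:: B a; B b; B c]).
Proof.
case: fs => [|f1 [|f2 [|f3 [|f4 rest]]]] Hg Hd; [by left|by right; left; exists f1| | | ].
- have [I1 c1] := Hg f1 (mem_head _ _).
  have [I2 c2] : good f2 by apply: Hg; rewrite !inE eqxx orbT.
  rewrite prod2 hM1 in Hd.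
  case: (ar2 (irr_ge2 I1 c1) (irr_ge2 I2 c2) Hd) => [[v1 v2]|[v2 v1]].
    have [a ->] := val2 I1 c1 v1.
    right; right; left; exists a, f2; split; first exact: perm_refl.
    by split; first by [].
  have [a ->] := val2 I2 c2 v2.
  right; right; left; exists a, f1; split; first exact: perm2.
  by split; [by [] | right].
- have [I1 c1] := Hg f1 (mem_head _ _).
  have [I2 c2] : good f2 by apply: Hg; rewrite !inE eqxx orbT.
  have [I3 c3] : good f3 by apply: Hg; rewrite !inE eqxx !orbT.
  rewrite prod3 !hM1 in Hd.
  have [v1 [v2 v3]] := ar3 (irr_ge2 I1 c1) (irr_ge2 I2 c2) (irr_ge2 I3 c3) Hd.
  have [a ->] := val2 I1 c1 v1; have [b ->] := val2 I2 c2 v2; have [c ->] := val2 I3 c3 v3.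
  by right; right; right; exists a, b, c.
- exfalso.
  have [I1 c1] := Hg f1 (mem_head _ _).
  have [I2 c2] : good f2 by apply: Hg; rewrite !inE eqxx orbT.
  have [I3 c3] : good f3 by apply: Hg; rewrite !inE eqxx !orbT.
  have [I4 c4] : good f4 by apply: Hg; rewrite !inE eqxx !orbT.
  have s0 : (0 < (\prod_(f <- rest) f).[1])%N.
    by apply: val_pos => f fi; apply: Hg; rewrite !inE fi !orbT.
  rewrite !big_cons !hM1 in Hd.
  exact: (ar4 (irr_ge2 I1 c1) (irr_ge2 I2 c2) (irr_ge2 I3 c3) (irr_ge2 I4 c4) s0 Hd).
Qed.

Lemma single P gs : irr P -> (forall g, g \in gs -> good g) ->
  P = \prod_(g <- gs) g -> P \in gs.
Proof.
move=> IP; case: gs => [|g gs] Hg E.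
  by case: IP => _ [P1 _]; rewrite big_nil in E.
rewrite big_cons in E.
have [I1 c1] := Hg g (mem_head _ _).
case: IP => _ [_ /(_ _ _ E)] [g1|r1].
  by case: I1 => _ [/(_ g1)].
case: gs Hg E r1 => [|h hs] Hg E r1.
  by rewrite E big_nil mulr1 mem_head.
exfalso; have [I2 c2] : good h by apply: Hg; rewrite !inE eqxx orbT.
move: (congr1 (fun p : {poly nat} => p.[1]) r1).
rewrite big_cons hM1 hornerC => /eqP; rewrite muln_eq1 => /andP[/eqP E2 _].
by have := irr_ge2 I2 c2; rewrite E2.
Qed.

Lemma mixed a F b c e : good F -> F.[1] = 4%N -> B a * F = B b * (B c * B e) -> False.
Proof.
move=> [IF c0] v4 E.
have [x [y [z EF]]] := val4 IF c0 v4.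
case: (eqVneq e a) => [ea|nea].
  subst e; apply: (irr_BB (a := b) (b := c) IF).
  apply: (mulI (B_neq0 a)); by rewrite E mulrA mulrC.
have E2 : B e * M [:: 0%N; c; b; (b + c)%N] = B a * M [:: 0%N; x; y; z].
  by rewrite -BB -EF E mulrC -mulrA.
have [w Ew] := K4 nea E2.
apply: (irr_BB (a := e) (b := w) IF).
apply: (mulI (B_neq0 a)); rewrite E mulrA BB Ew.
by rewrite [B w * B a]mulrC -mulrA [B w * B e]mulrC.
Qed.

Lemma Xcase (fs gs : seq {poly nat}) : (forall g, g \in gs -> irr g) ->
  \prod_(f <- fs) f = \prod_(g <- gs) g -> 'X \in fs -> 'X \in gs.
Proof.
move=> Ig E Xf.
have : (\prod_(g <- gs) g)`_0 == 0%N.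
  rewrite -E c0_prod; apply/hasP; exists 'X => //; by rewrite coefX.
rewrite c0_prod => /hasP[g gi /eqP g0].
by rewrite -(irr_X (Ig g gi) g0).
Qed.

Lemma val_ge2 (fs : seq {poly nat}) : (forall f, f \in fs -> good f) -> fs != [::] ->
  (2 <= (\prod_(f <- fs) f).[1])%N.
Proof.
case: fs => [|f fs] // Hg _.
have [If c0] := Hg f (mem_head _ _).
have := irr_ge2 If c0.
have : (0 < (\prod_(f <- fs) f).[1])%N by apply: val_pos => g gi; apply: Hg; rewrite inE gi orbT.
rewrite big_cons hM1; nia.
Qed.

Lemma valBF a F : (B a * F).[1] = (2 * F.[1])%N.
Proof. by rewrite hM1 valB. Qed.

Lemma common (fs gs : seq {poly nat}) : (forall f, f \in fs -> irr f) -> (forall g, g \in gs -> irr g) ->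
  \prod_(f <- fs) f = \prod_(g <- gs) g -> ((\prod_(f <- fs) f).[1] %| 8)%N -> fs != [::] ->
  exists2 f, f \in fs & f \in gs.
Proof.
move=> If Ig E Hd nf.
case: (boolP ('X \in fs)) => Xf; first by exists 'X => //; exact: Xcase Ig E Xf.
case: (boolP ('X \in gs)) => Xg; first by exists 'X => //; exact: Xcase If (esym E) Xg.
have Gf : forall f, f \in fs -> good f.
  move=> f fi; split; first exact: If.
  apply/eqP => f0; move: Xf; by rewrite -(irr_X (If f fi) f0) fi.
have Gg : forall g, g \in gs -> good g.
  move=> g gi; split; first exact: Ig.
  apply/eqP => g0; move: Xg; by rewrite -(irr_X (Ig g gi) g0) gi.
have Hd' : ((\prod_(g <- gs) g).[1] %| 8)%N by rewrite -E.
case: (eqVneq gs [::]) => [gs0|ng].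
  have := val_ge2 Gf nf; by rewrite E gs0 big_nil hornerC.
have single_g : forall g, gs = [:: g] -> exists2 f, f \in fs & f \in gs.
  move=> g gs1; exists g; last by rewrite gs1 mem_head.
  apply: single (Ig g _) Gf _; first by rewrite gs1 mem_head.
  by rewrite E gs1 big_cons big_nil mulr1.
case: (shapes Gf Hd) => [fs0|[[f fs1]|[[a [F [pf [GF vF]]]]|[a [b [c pf]]]]]].
- by rewrite fs0 in nf.
- exists f; first by rewrite fs1 mem_head.
  apply: single (If f _) Gg _; first by rewrite fs1 mem_head.
  by rewrite -E fs1 big_cons big_nil mulr1.
- have Ef : \prod_(f <- fs) f = B a * F by rewrite (perm_big _ pf) prod2.
  case: (shapes Gg Hd') => [gs0|[[g gs1]|[[b [G [pg [GG vG]]]]|[b [c [e pg]]]]]].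
  + by rewrite gs0 in ng.
  + exact: single_g gs1.
  + have Eg : \prod_(g <- gs) g = B b * G by rewrite (perm_big _ pg) prod2.
    have E' : B a * F = B b * G by rewrite -Ef -Eg.
    have vFG : F.[1] = G.[1].
      have := congr1 (fun p : {poly nat} => p.[1]) E'; rewrite /= !valBF => /eqP.
      by rewrite eqn_mul2l /= => /eqP.
    case: GF => IF cF; case: GG => IG cG.
    case: vF => vF.
    * have [c EF] := val2 IF cF vF.
      have [e EG] := val2 IG cG (etrans (esym vFG) vF).
      exists (B b); last by rewrite (perm_mem pg) mem_head.
      rewrite (perm_mem pf) EF.
      have E3 : B b * B e = B a * B c by rewrite -EF -EG E'.
      have := K2 E3; case=> ->; by rewrite !inE eqxx ?orbT.
    * case: (eqVneq a b) => [ab|nab].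
        exists (B a); first by rewrite (perm_mem pf) mem_head.
        by rewrite (perm_mem pg) ab mem_head.
      exfalso.
      have [x [y [z EF]]] := val4 IF cF vF.
      have [p [q [r EG]]] := val4 IG cG (etrans (esym vFG) vF).
      rewrite EF EG in E'.
      have [w Ew] := K4 nab E'.
      by apply: (irr_BB IF); rewrite EF Ew.
  + exfalso.
    have Eg : \prod_(g <- gs) g = B b * (B c * B e) by rewrite (perm_big _ pg) prod3.
    have E' : B a * F = B b * (B c * B e) by rewrite -Ef -Eg.
    have v4 : F.[1] = 4%N.
      have := congr1 (fun p : {poly nat} => p.[1]) E'; rewrite /= valBF !hM1 !valB.
      by case: vF => ->.
    exact: (mixed GF v4 E').
- have Ef : \prod_(f <- fs) f = B a * (B b * B c) by rewrite (perm_big _ pf) prod3.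
  case: (shapes Gg Hd') => [gs0|[[g gs1]|[[d [G [pg [GG vG]]]]|[d [e [f pg]]]]]].
  + by rewrite gs0 in ng.
  + exact: single_g gs1.
  + exfalso.
    have Eg : \prod_(g <- gs) g = B d * G by rewrite (perm_big _ pg) prod2.
    have E' : B d * G = B a * (B b * B c) by rewrite -Ef -Eg.
    have v4 : G.[1] = 4%N.
      have := congr1 (fun p : {poly nat} => p.[1]) E'; rewrite /= valBF !hM1 !valB.
      by case: vG => ->.
    exact: (mixed GG v4 E').
  + have Eg : \prod_(g <- gs) g = B d * (B e * B f) by rewrite (perm_big _ pg) prod3.
    case: (eqVneq c f) => [cf|ncf].
      exists (B c); first by rewrite (perm_mem pf) !inE eqxx !orbT.
      by rewrite (perm_mem pg) cf !inE eqxx !orbT.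
    have E2 : B c * M [:: 0%N; b; a; (a + b)%N] = B f * M [:: 0%N; e; d; (d + e)%N].
      rewrite -!BB mulrCA [B c * B b]mulrC -Ef E Eg.
      by rewrite [X in _ = X]mulrCA [B f * B e]mulrC.
    have [w Ew] := K4 ncf E2.
    have : B f * B w = B a * B b by rewrite [X in _ = X]BB Ew mulrC.
    move/K2 => Hf.
    exists (B f); last by rewrite (perm_mem pg) !inE eqxx !orbT.
    rewrite (perm_mem pf); case: Hf => ->; by rewrite !inE eqxx ?orbT.
Qed.

Lemma uf n : forall fs gs : seq {poly nat}, size fs = n ->
  (forall f, f \in fs -> irr f) -> (forall g, g \in gs -> irr g) ->
  \prod_(f <- fs) f = \prod_(g <- gs) g -> ((\prod_(f <- fs) f).[1] %| 8)%N ->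
  perm_eq fs gs.
Proof.
elim: n => [|n IH] fs gs sz If Ig E Hd.
  case: fs sz E Hd If => // _ E Hd If.
  case: (eqVneq gs [::]) => [->//|ng].
  have Hd' : ((\prod_(g <- gs) g).[1] %| 8)%N by rewrite -E.
  by have [g gi] := common Ig If (esym E) Hd' ng.
have nf : fs != [::] by case: fs sz If E Hd.
have [c cf cg] := common If Ig E Hd nf.
have pf := perm_to_rem cf; have pg := perm_to_rem cg.
have Ef : \prod_(f <- fs) f = c * \prod_(f <- rem c fs) f by rewrite (perm_big _ pf) big_cons.
have Eg : \prod_(g <- gs) g = c * \prod_(g <- rem c gs) g by rewrite (perm_big _ pg) big_cons.
have Er : \prod_(f <- rem c fs) f = \prod_(g <- rem c gs) g.
  by apply: (mulI (irr_neq0 (If c cf))); rewrite -Ef -Eg.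
have Hr : ((\prod_(f <- rem c fs) f).[1] %| 8)%N.
  by apply: dvdn_trans Hd; rewrite Ef hM1 dvdn_mull.
have pr : perm_eq (rem c fs) (rem c gs).
  apply: IH Er Hr.
  - by rewrite size_rem // sz.
  - by move=> f /mem_rem; apply: If.
  - by move=> g /mem_rem; apply: Ig.
by rewrite (permPl pf) (permPr pg) perm_cons.
Qed.

Unset Implicit Arguments.

Theorem mainTheorem10 (P : {poly nat}) :
  P.[1] = 8%N ->
  forall fs gs : seq {poly nat},
    irr_factorisation P fs -> irr_factorisation P gs -> perm_eq fs gs.
Proof.
move=> HP fs gs [If Ef] [Ig Eg].
apply: (@uf (size fs) fs gs erefl) => //; first by rewrite Ef Eg.
by rewrite Ef HP.
Qed.
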